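(* If (A.4) holds, then for any fixed $\zeta\in(0,1)$, \[ |F_\omega(x^\star_{\omega,\tau})-F_\omega(x^\star_\omega)|=\mathcal{O}(\tau^{1-\zeta}). \]
   Context: Let $\Omega=(t_0,t_E)$ bounded, $|\Omega|=t_E-t_0$, $t_1,\dots,t_M\in[t_0,t_E]$; $\mathcal{X}=(H^1(\Omega))^{n_y}\times(L^2(\Omega))^{n_z}$ with product inner product and norm $\|\cdot\|_{\mathcal{X}}$, $x=(y,z)$. For $f,c,b$: $F(x)=\int_\Omega f(\dot y,y,z,t)dt$, $r(x)=\int_\Omega\|c(\dot y,y,z,t)\|_2^2dt+\|b(y(t_1),\dots,y(t_M))\|_2^2$, $\Gamma(x)=-\sum_{j=1}^{n_z}\int_\Omega\log z_j(t)dt$. DOP: minimize $F$ subject to $b(\dots)=0$, $c=0$, $z\ge0$ a.e., with global minimizer $x^\star$. For $\omega\in(0,1)$: $F_\omega=F+\frac1{2\omega}r$ and $x^\star_\omega$ minimizes $F_\omega$ over $\{z\ge0\text{ a.e.}\}$. For $\tau\in(0,\omega]$: $F_{\omega,\tau}=F_\omega+\tau\Gamma$ and $x^\star_{\omega,\tau}$ minimizes $F_{\omega,\tau}$ over $\mathcal{X}$. Standing assumptions: (A.2) $\|c(\dot y(t),y(t),z(t),t)\|_1$ and $\|b(\dots)\|_1$ bounded for all $x$ with $z\ge0$, $t\in\Omega$; $F$ bounded below on $\{z\ge0\}$. (A.3) $f,c,b$ globally Lipschitz in all arguments except $t$. (A.4) $x^\star_\omega$ and $x^\star_{\omega,\tau}$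 are bounded in $\|z\|_{L^\infty(\Omega)}$ and $\|x\|_{\mathcal{X}}$, and $\|x^\star\|_{\mathcal{X}}$ is bounded. The $\mathcal{O}$ is as $\tau\to0$. *)

(* Defs.v *)
From HB Require Import structures.
From mathcomp Require Import all_boot all_order all_algebra.
From mathcomp Require Import all_classical all_reals all_analysis.
Set Implicit Arguments. Unset Strict Implicit. Unset Printing Implicit Defensive.
Import Order.TTheory GRing.Theory Num.Theory.
Import numFieldNormedType.Exports.
Local Open Scope classical_set_scope.
Local Open Scope ring_scope.

Section PenaltyBarrier.
Variable R : realType.
Local Notation leb := (@lebesgue_measure R).

Definition Omega (t0 tE : R) : set R := `]t0, tE[.

Definition norm1 n (v : 'rV[R]_n) : R := \sum_(i < n) `|v ord0 i|.
Definition sqnorm2 n (v : 'rV[R]_n) : R := \sum_(i < n) (v ord0 i) ^+ 2.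

Definition L2fun (t0 tE : R) (g : R -> R) : Prop :=
  measurable_fun (Omega t0 tE) g /\
  (\int[leb]_(t in Omega t0 tE) ((g t) ^+ 2)%:E < +oo)%E.
Definition L2sq (t0 tE : R) (g : R -> R) : R :=
  fine (\int[leb]_(t in Omega t0 tE) ((g t) ^+ 2)%:E)%E.

(* scalar H^1(Omega) membership: y is the absolutely continuous representative
   on [t0,tE] of an H^1 function whose weak derivative is dy in L^2(Omega) *)
Definition H1fun (t0 tE : R) (y dy : R -> R) : Prop :=
  L2fun t0 tE dy /\
  forall t, t0 <= t <= tE -> y t = y t0 + Rintegral leb `]t0, t[ dy.

(* an element x = (y, z) of X, carried together with the weak derivative of y *)
Record traj (ny nz : nat) := Traj {
  ty : R -> 'rV[R]_ny ;
  tdy : R -> 'rV[R]_ny ;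
  tz : R -> 'rV[R]_nz
}.

Variables (ny nz : nat).

Definition inX (t0 tE : R) (x : traj ny nz) : Prop :=
  (forall i : 'I_ny, H1fun t0 tE (fun t => ty x t ord0 i) (fun t => tdy x t ord0 i)) /\
  (forall j : 'I_nz, L2fun t0 tE (fun t => tz x t ord0 j)).

Definition normX (t0 tE : R) (x : traj ny nz) : R :=
  Num.sqrt (\sum_(i < ny) (L2sq t0 tE (fun t => ty x t ord0 i)
                            + L2sq t0 tE (fun t => tdy x t ord0 i))
            + \sum_(j < nz) L2sq t0 tE (fun t => tz x t ord0 j)).

Definition zLinf_le (t0 tE : R) (x : traj ny nz) (B : R) : Prop :=
  \forall t \ae leb, Omega t0 tE t -> forall j : 'I_nz, `|tz x t ord0 j| <= B.

Definition zge0 (t0 tE : R) (x : traj ny nz) : Prop :=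
  \forall t \ae leb, Omega t0 tE t -> forall j : 'I_nz, 0 <= tz x t ord0 j.

Variables (nc nb M : nat).

Definition f_integrand (f : 'rV[R]_ny -> 'rV[R]_ny -> 'rV[R]_nz -> R -> R)
  (x : traj ny nz) : R -> R :=
  fun t => f (tdy x t) (ty x t) (tz x t) t.
Definition c_integrand (c : 'rV[R]_ny -> 'rV[R]_ny -> 'rV[R]_nz -> R -> 'rV[R]_nc)
  (x : traj ny nz) : R -> R :=
  fun t => sqnorm2 (c (tdy x t) (ty x t) (tz x t) t).

Definition Fobj (t0 tE : R) f (x : traj ny nz) : R :=
  Rintegral leb (Omega t0 tE) (f_integrand f x).

Definition rpen (t0 tE : R) c (b : ('I_M -> 'rV[R]_ny) -> 'rV[R]_nb)
  (tp : 'I_M -> R) (x : traj ny nz) : R :=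
  Rintegral leb (Omega t0 tE) (c_integrand c x)
  + sqnorm2 (b (fun k => ty x (tp k))).

Definition Fomega (t0 tE : R) f c b tp (w : R) (x : traj ny nz) : R :=
  Fobj t0 tE f x + (2 * w)^-1 * rpen t0 tE c b tp x.

(* Gamma(x) = - sum_j int_Omega log z_j dt, with value +oo when z is not
   positive a.e. (the logarithm is then undefined) *)
Definition Gamma (t0 tE : R) (x : traj ny nz) : \bar R :=
  if `[< \forall t \ae leb, Omega t0 tE t -> forall j : 'I_nz, 0 < tz x t ord0 j >]
  then (\sum_(j < nz) \int[leb]_(t in Omega t0 tE) (- ln (tz x t ord0 j))%:E)%E
  else +oo%E.

Definition Fomegatau (t0 tE : R) f c b tp (w tau : R) (x : traj ny nz) : \bar R :=
  ((Fomega t0 tE f c b tp w x)%:E + tau%:E * Gamma t0 tE x)%E.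

End PenaltyBarrier.

(* Main.v *)
Require Import Defs.
From HB Require Import structures.
From mathcomp Require Import all_boot all_order all_algebra.
From mathcomp Require Import all_classical all_reals all_analysis.
From mathcomp Require Import measurable_realfun ring lra.
Import Order.TTheory GRing.Theory Num.Theory.
Import numFieldNormedType.Exports.
Local Open Scope classical_set_scope.
Local Open Scope ring_scope.

Section Helpers.
Variable R : realType.
Local Notation leb := (@lebesgue_measure R).

Lemma aeS (P Q : R -> Prop) : (forall t, P t -> Q t) ->
  {ae leb, forall t, P t} -> {ae leb, forall t, Q t}.
Proof. by move=> PQ; apply: (@filterS _ _ (ae_filter_ringOfSetsType leb)). Qed.

Lemma aeS2 (P Q S : R -> Prop) : (forall t, P t -> Q t -> S t) ->
  {ae leb, forall t, P t} -> {ae leb, forall t, Q t} -> {ae leb, forall t, S t}.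
Proof. by move=> PQ; apply: (@filterS2 _ _ (ae_filter_ringOfSetsType leb)). Qed.

Lemma int_le_cst (D : set R) (g : R -> R) (k : R) : measurable D ->
  measurable_fun D g -> 0 <= k -> (leb D < +oo)%E ->
  {ae leb, forall t, D t -> g t <= k} ->
  (\int[leb]_(t in D) (g t)%:E <= (k * fine (leb D))%:E)%E.
Proof.
move=> mD mg k0 Dfin ae.
have mEg : measurable_fun D (EFin \o g) by exact/measurable_EFinP.
rewrite integralE.
apply: (@le_trans _ _ (\int[leb]_(t in D) (EFin \o g)^\+ t - 0)%E).
  apply: leeB => //; apply: integral_ge0 => x _; exact: funeneg_ge0.
rewrite sube0 EFinM fineK ?ge0_fin_numE//.
have k0E : (0 <= k%:E)%E by rewrite lee_fin.
have H : {ae leb, forall x, D x -> (`|(EFin \o g)^\+ x| <= k%:E)%E}.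
  move: ae; apply: aeS => t H Dt.
  rewrite gee0_abs ?funepos_ge0// funeposE /= ge_max !lee_fin k0 andbT.
  exact: H.
have H2 := @integral_le_bound _ _ _ leb D _ (k%:E) mD (measurable_funepos mEg) k0E H.
apply: (le_trans _ H2); apply: ge0_le_integral => //.
- exact: measurable_funepos.
- exact/measurableT_comp/measurable_funepos.
- by move=> x Dx; rewrite gee0_abs ?funepos_ge0.
Qed.

Lemma int_ge_cst (D : set R) (g : R -> R) (k : R) : measurable D ->
  measurable_fun D g -> 0 <= k -> (leb D < +oo)%E ->
  {ae leb, forall t, D t -> - k <= g t} ->
  ((- (k * fine (leb D)))%:E <= \int[leb]_(t in D) (g t)%:E)%E.
Proof.
move=> mD mg k0 Dfin ae.
have mEg : measurable_fun D (EFin \o g) by exact/measurable_EFinP.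
rewrite integralE EFinN -sub0e.
apply: leeB; first by apply: integral_ge0 => x _; exact: funepos_ge0.
rewrite EFinM fineK ?ge0_fin_numE//.
have k0E : (0 <= k%:E)%E by rewrite lee_fin.
have H : {ae leb, forall x, D x -> (`|(EFin \o g)^\- x| <= k%:E)%E}.
  move: ae; apply: aeS => t H Dt.
  rewrite gee0_abs ?funeneg_ge0// funenegE /= ge_max !lee_fin k0 andbT.
  by rewrite lerNl; exact: H.
have H2 := @integral_le_bound _ _ _ leb D _ (k%:E) mD (measurable_funeneg mEg) k0E H.
apply: (le_trans _ H2); apply: ge0_le_integral => //.
- exact: measurable_funeneg.
- exact/measurableT_comp/measurable_funeneg.
- by move=> x Dx; rewrite gee0_abs ?funeneg_ge0.
Qed.

Lemma Rint_diff (D : set R) (g1 g2 : R -> R) (k : R) : measurable D ->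
  (leb D < +oo)%E ->
  leb.-integrable D (EFin \o g1) -> leb.-integrable D (EFin \o g2) -> 0 <= k ->
  {ae leb, forall t, D t -> `|g1 t - g2 t| <= k} ->
  Rintegral leb D g1 - Rintegral leb D g2 <= k * fine (leb D).
Proof.
move=> mD Dfin i1 i2 k0 ae.
rewrite -(@RintegralB _ _ _ leb D _ _ mD i1 i2).
have iB : leb.-integrable D (EFin \o (fun t => g1 t - g2 t)).
  exact: (@integrableB _ _ _ leb D mD _ _ i1 i2).
apply: (le_trans (ler_norm _)).
apply: (le_trans (@le_normr_Rintegral _ _ _ leb D _ mD iB)).
have mh : measurable_fun D (fun t => g1 t - g2 t).
  by apply/measurable_EFinP; exact: (@measurable_int _ _ _ leb D _ iB).
have := @int_le_cst D _ k mD (measurableT_comp (@normr_measurable _ _) mh) k0 Dfin ae.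
rewrite /Rintegral; move=> H.
have fin : (\int[leb]_(x in D) (`|g1 x - g2 x|)%:E)%E \is a fin_num.
  exact: (@integrable_fin_num _ _ _ leb D mD _ (integrable_norm iB)).
by rewrite -lee_fin fineK.
Qed.

End Helpers.

Section N.
Variable R : realType.
Lemma norm1_ge0 n (v : 'rV[R]_n) : 0 <= norm1 v.
Proof. by apply: sumr_ge0 => i _. Qed.

Lemma norm1_0 n : norm1 (0 : 'rV[R]_n) = 0.
Proof. by rewrite /norm1 big1 // => i _; rewrite mxE normr0. Qed.

Lemma norm1_shift n (z : 'rV[R]_n) (e : R) : 0 <= e ->
  norm1 ((z + const_mx e) - z) = n%:R * e.
Proof.
move=> e0; rewrite addrAC subrr add0r /norm1.
under eq_bigr do rewrite mxE ger0_norm //.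
by rewrite sumr_const card_ord mulr_natl.
Qed.

Lemma norm1_entry n (a : 'rV[R]_n) i : `|a ord0 i| <= norm1 a.
Proof.
rewrite /norm1 (bigD1 i) //= lerDl; exact: sumr_ge0.
Qed.

Lemma sq_diff n (a b : 'rV[R]_n) :
  `|sqnorm2 a - sqnorm2 b| <= norm1 (a - b) * (norm1 a + norm1 b).
Proof.
rewrite /sqnorm2 -sumrB; apply: (le_trans (ler_norm_sum _ _ _)).
rewrite {1}/norm1 mulr_suml; apply: ler_sum => i _.
rewrite mxE subr_sqr normrM mxE ler_wpM2l //.
apply: (le_trans (ler_normD _ _)); apply: lerD; exact: norm1_entry.
Qed.
End N.

Section S.
Variable R : realType.
Lemma pow_bound (tau zeta A Bc : R) : 0 < tau -> tau < 1 -> 0 < zeta -> 0 <= A -> 0 <= Bc ->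
  A * tau + Bc * (tau * (- ln tau)) <= (A + Bc / zeta) * tau `^ (1 - zeta).
Proof.
move=> t0 t1 z0 A0 B0.
have lnt : ln tau <= 0 by rewrite -ln1 ler_ln ?posrE // ltW.
set P := expR (- zeta * ln tau).
have hP := expR_ge1Dx (- zeta * ln tau).
have xge0 : 0 <= - zeta * ln tau by rewrite mulNr -mulrN mulr_ge0 ?oppr_ge0 // ltW.
have P1 : 1 <= P by rewrite /P; lra.
have Pl : - ln tau <= P / zeta.
  rewrite ler_pdivlMr //; rewrite /P; nra.
have -> : tau `^ (1 - zeta) = tau * P.
  rewrite /powR gt_eqF // /P -[in tau * _](lnK (x := tau)) ?posrE // -expRD.
  congr expR; rewrite expRK; ring.
have h1 : A * tau <= A * (tau * P) by rewrite ler_wpM2l // ler_peMr // ltW.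
have h2 : Bc * (tau * (- ln tau)) <= Bc * (tau * (P / zeta)).
  by rewrite ler_wpM2l // ler_wpM2l // ltW.
have -> : (A + Bc / zeta) * (tau * P) = A * (tau * P) + Bc * (tau * (P / zeta)) by rewrite /=; ring.
lra.
Qed.
End S.

Theorem mainTheorem11 (R : realType) (t0 tE : R) (ny nz nc nb M : nat)
  (tp : 'I_M -> R)
  (f : 'rV[R]_ny -> 'rV[R]_ny -> 'rV[R]_nz -> R -> R)
  (c : 'rV[R]_ny -> 'rV[R]_ny -> 'rV[R]_nz -> R -> 'rV[R]_nc)
  (b : ('I_M -> 'rV[R]_ny) -> 'rV[R]_nb)
  (xs : traj R ny nz) (xw : R -> traj R ny nz) (xwt : R -> R -> traj R ny nz) :
  t0 < tE ->
  (forall k, t0 <= tp k <= tE) ->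
  (* F and r are well defined on X: their integrands are integrable *)
  (forall x, inX t0 tE x ->
     (@lebesgue_measure R).-integrable (Omega t0 tE) (EFin \o f_integrand f x) /\
     (@lebesgue_measure R).-integrable (Omega t0 tE) (EFin \o c_integrand c x)) ->
  (* (A.2) *)
  (exists K : R,
     (forall (dy y : 'rV[R]_ny) (z : 'rV[R]_nz) (t : R), Omega t0 tE t -> (forall j : 'I_nz, 0 <= z ord0 j) ->
        norm1 (c dy y z t) <= K) /\
     (forall ys : 'I_M -> 'rV[R]_ny, norm1 (b ys) <= K)) ->
  (exists m : R, forall x, inX t0 tE x -> zge0 t0 tE x -> m <= Fobj t0 tE f x) ->
  (* (A.3) *)
  (exists L : R,
     (forall (dy y dy' y' : 'rV[R]_ny) (z z' : 'rV[R]_nz) (t : R), Omega t0 tE t ->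
        `|f dy y z t - f dy' y' z' t|
          <= L * (norm1 (dy - dy') + norm1 (y - y') + norm1 (z - z'))) /\
     (forall (dy y dy' y' : 'rV[R]_ny) (z z' : 'rV[R]_nz) (t : R), Omega t0 tE t ->
        norm1 (c dy y z t - c dy' y' z' t)
          <= L * (norm1 (dy - dy') + norm1 (y - y') + norm1 (z - z'))) /\
     (forall ys ys' : 'I_M -> 'rV[R]_ny, norm1 (b ys - b ys') <= L * \sum_(k < M) norm1 (ys k - ys' k))) ->
  (* x^star is a global minimizer of the DOP *)
  (inX t0 tE xs /\ zge0 t0 tE xs /\
   b (fun k => ty xs (tp k)) = 0 /\
   (\forall t \ae (@lebesgue_measure R), Omega t0 tE t ->
       c (tdy xs t) (ty xs t) (tz xs t) t = 0) /\
   (forall x, inX t0 tE x -> zge0 t0 tE x -> b (fun k => ty x (tp k)) = 0 ->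
      (\forall t \ae (@lebesgue_measure R), Omega t0 tE t ->
          c (tdy x t) (ty x t) (tz x t) t = 0) ->
      Fobj t0 tE f xs <= Fobj t0 tE f x)) ->
  (* x^star_omega minimizes F_omega over {z >= 0 a.e.} *)
  (forall w, 0 < w < 1 ->
     inX t0 tE (xw w) /\ zge0 t0 tE (xw w) /\
     forall x, inX t0 tE x -> zge0 t0 tE x ->
       Fomega t0 tE f c b tp w (xw w) <= Fomega t0 tE f c b tp w x) ->
  (* x^star_{omega,tau} minimizes F_{omega,tau} over X *)
  (forall w tau, 0 < w < 1 -> 0 < tau <= w ->
     inX t0 tE (xwt w tau) /\
     forall x, inX t0 tE x ->
       (Fomegatau t0 tE f c b tp w tau (xwt w tau)
          <= Fomegatau t0 tE f c b tp w tau x)%E) ->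
  (* (A.4) *)
  (exists B : R,
     normX t0 tE xs <= B /\
     forall w, 0 < w < 1 ->
       (zLinf_le t0 tE (xw w) B /\ normX t0 tE (xw w) <= B) /\
       forall tau, 0 < tau <= w ->
         zLinf_le t0 tE (xwt w tau) B /\ normX t0 tE (xwt w tau) <= B) ->
  (* conclusion: |F_omega(x_{omega,tau}) - F_omega(x_omega)| = O(tau^(1-zeta)) as tau -> 0 *)
  forall w zeta : R, 0 < w < 1 -> 0 < zeta < 1 ->
  exists C delta : R, 0 < delta /\
    forall tau, 0 < tau -> tau < delta -> tau <= w ->
      `|Fomega t0 tE f c b tp w (xwt w tau) - Fomega t0 tE f c b tp w (xw w)|
        <= C * tau `^ (1 - zeta).
Proof.
move=> ht tpk hint [K [hKc hKb]] _ [L [hLf [hLc hLb]]] _ hxw hxwt [B [_ hB]] w zeta hw hz.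
have mO : measurable (Omega t0 tE) := measurable_itv _.
have fO : (@lebesgue_measure R (Omega t0 tE) < +oo)%E.
  by rewrite /Omega lebesgue_measure_itv; case: ifP => _ //=; rewrite ltry.
set Om := fine (@lebesgue_measure R (Omega t0 tE)).
have Om0 : 0 <= Om by apply: fine_ge0; exact: measure_ge0.
set Lp := Num.max L 0. set Kp := Num.max K 0. set nzr := (nz%:R : R).
set kB := Num.max (ln B) 0.
have Lp0 : 0 <= Lp by rewrite le_max lexx orbT.
have Kp0 : 0 <= Kp by rewrite le_max lexx orbT.
have kB0 : 0 <= kB by rewrite le_max lexx orbT.
have nzr0 : 0 <= nzr by rewrite ler0n.
set c1 := Lp * nzr * Om + (2 * w)^-1 * (Lp * nzr * (2 * Kp) * Om).
set A := Num.max (c1 + nzr * (kB * Om)) 0.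
set Bc := nzr * Om.
exists (A + Bc / zeta), 1; split => // tau tau0 tau1 tauw.
have tau1' : tau < 1 by case/andP: hw => _ w1; exact: (le_lt_trans tauw).
have [inXw [zw minw]] := hxw w hw.
have htw : 0 < tau <= w by rewrite tau0 tauw.
have [inXt mint] := hxwt w tau hw htw.
have [_ hBt] := hB w hw.
have [zLt _] := hBt tau htw.
pose xe := @Traj R ny nz (ty (xw w)) (tdy (xw w)) (fun t => tz (xw w) t + const_mx tau).
have inXe : inX t0 tE xe.
  split; first exact: inXw.1.
  move=> j; have [mz iz] := inXw.2 j.
  have -> : (fun t => tz xe t ord0 j) = (fun t => tz (xw w) t ord0 j + tau).
    by apply: funext => t; rewrite /= !mxE.
  split; first by apply: measurable_funD => //; exact: measurable_cst.
  move: iz; set z := (fun t => tz (xw w) t ord0 j) => iz.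
  have mz2 : measurable_fun (Omega t0 tE) (fun t => (2 * z t ^+ 2)%:E).
    by apply/measurable_EFinP; apply: measurable_funM => //; exact: measurable_funX.
  have mc2 : measurable_fun (Omega t0 tE) (fun t : R => (2 * tau ^+ 2)%:E).
    exact: measurable_cst.
  apply: (@le_lt_trans _ _ (\int[@lebesgue_measure R]_(t in Omega t0 tE) (2 * z t ^+ 2 + 2 * tau ^+ 2)%:E)%E).
    apply: ge0_le_integral => //.
    - by move=> t _; rewrite lee_fin sqr_ge0.
    - apply/measurable_EFinP; apply: measurable_funX; apply: measurable_funD => //.
    - apply/measurable_EFinP; apply: measurable_funD => //.
      by apply: measurable_funM => //; exact: measurable_funX.
    - move=> t _; rewrite lee_fin /= /z; have := sqr_ge0 (tz (xw w) t ord0 j - tau); rewrite !expr2; nra.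
  under eq_integral do rewrite EFinD.
  rewrite ge0_integralD //; last 2 first.
  - by move=> t _; rewrite lee_fin mulr_ge0 // sqr_ge0.
  - by move=> t _; rewrite lee_fin mulr_ge0 // sqr_ge0.
  apply: lte_add_pinfty.
  - under eq_integral do rewrite EFinM.
    rewrite ge0_integralZl_EFin //.
    + by apply: lte_mul_pinfty.
    + by move=> x Ox; rewrite lee_fin sqr_ge0.
    + by apply/measurable_EFinP; exact: measurable_funX.
  - have := @integral_cst _ _ _ (@lebesgue_measure R) (Omega t0 tE) mO (2 * tau ^+ 2)%:E.
    rewrite /cst => ->; apply: lte_mul_pinfty => //.
    by rewrite lee_fin mulr_ge0 // sqr_ge0.
have zge0e : zge0 t0 tE xe.
  move: zw; apply: aeS => t H Ot j; rewrite /= !mxE.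
  by apply: addr_ge0; [exact: H | exact: ltW].
have w0 : 0 < w by case/andP: hw.
have iw0 : 0 <= (2 * w)^-1 by rewrite invr_ge0 mulr_ge0 // ltW.
have [ife ice] := hint xe inXe.
have [ifw icw] := hint (xw w) inXw.
have LLp : L <= Lp by rewrite le_max lexx.
have KKp : K <= Kp by rewrite le_max lexx.
have nt0 : 0 <= nzr * tau by rewrite mulr_ge0 // ltW.
have d1 : Fobj t0 tE f xe - Fobj t0 tE f (xw w) <= (Lp * (nzr * tau)) * Om.
  apply: Rint_diff => //; first by rewrite mulr_ge0.
  apply: aeW => t Ot; rewrite /f_integrand /=.
  apply: (le_trans (hLf _ _ _ _ _ _ t Ot)).
  by rewrite !subrr !norm1_0 !add0r (@norm1_shift R _ _ tau (ltW tau0)) ler_wpM2r.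
have d2 : Rintegral (@lebesgue_measure R) (Omega t0 tE) (c_integrand c xe)
    - Rintegral (@lebesgue_measure R) (Omega t0 tE) (c_integrand c (xw w))
    <= (Lp * (nzr * tau) * (2 * Kp)) * Om.
  apply: Rint_diff => //; first by apply: mulr_ge0; apply: mulr_ge0.
  move: zw; apply: aeS => t H Ot; rewrite /c_integrand /=.
  apply: (le_trans (@sq_diff R _ _ _)).
  have hz0 := H Ot.
  have hz0e : forall j, 0 <= (tz (xw w) t + const_mx tau) ord0 j.
    by move=> j; rewrite !mxE addr_ge0 // ?ltW // hz0.
  apply: ler_pM; first exact: norm1_ge0.
  - by apply: addr_ge0; exact: norm1_ge0.
  - apply: (le_trans (hLc _ _ _ _ _ _ t Ot)).
    by rewrite !subrr !norm1_0 !add0r (@norm1_shift R _ _ tau (ltW tau0)) ler_wpM2r.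
  - have := hKc (tdy (xw w) t) (ty (xw w) t) _ t Ot hz0e.
    have := hKc (tdy (xw w) t) (ty (xw w) t) _ t Ot hz0.
    lra.
have hFe : Fomega t0 tE f c b tp w xe <= Fomega t0 tE f c b tp w (xw w)
    + ((Lp * (nzr * tau)) * Om + (2 * w)^-1 * ((Lp * (nzr * tau) * (2 * Kp)) * Om)).
  rewrite /Fomega /rpen /=.
  have := ler_wpM2l iw0 d2.
  rewrite mulrBr; lra.
have hposE : \forall t \ae (@lebesgue_measure R), Omega t0 tE t ->
    forall j : 'I_nz, 0 < tz xe t ord0 j.
  move: zw; apply: aeS => t H Ot j; rewrite /= !mxE.
  have := H Ot j; lra.
have lt0 : 0 <= - ln tau.
  by rewrite oppr_ge0 -ln1 ler_ln ?posrE // ltW.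
have hGe : (Gamma t0 tE xe <= (nzr * (- ln tau * Om))%:E)%E.
  rewrite /Gamma asboolT //.
  have -> : (nzr * (- ln tau * Om))%:E = (\sum_(j < nz) (- ln tau * Om)%:E)%E.
    by rewrite sumEFin sumr_const card_ord mulr_natl.
  apply: lee_sum => j _.
  apply: (@int_le_cst R (Omega t0 tE) (fun t => - ln (tz xe t ord0 j))) => //.
  - have [mz _] := inXe.2 j.
    exact: (measurableT_comp (@oppr_measurable R setT) (measurableT_comp (@measurable_ln R) mz)).
  - move: zw; apply: aeS => t H Ot.
    have Hp := H Ot j.
    rewrite /= !mxE lerN2 ler_ln ?posrE //; try lra.
have hGt : (\forall t \ae (@lebesgue_measure R), Omega t0 tE t ->
    forall j : 'I_nz, 0 < tz (xwt w tau) t ord0 j) ->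
    ((nzr * (- (kB * Om)))%:E <= Gamma t0 tE (xwt w tau))%E.
  move=> P; rewrite /Gamma asboolT //.
  have -> : (nzr * (- (kB * Om)))%:E = (\sum_(j < nz) (- (kB * Om))%:E)%E.
    by rewrite sumEFin sumr_const card_ord mulr_natl.
  apply: lee_sum => j _.
  apply: (@int_ge_cst R (Omega t0 tE) (fun t => - ln (tz (xwt w tau) t ord0 j))) => //.
  - have [mz _] := inXt.2 j.
    exact: (measurableT_comp (@oppr_measurable R setT) (measurableT_comp (@measurable_ln R) mz)).
  - apply: (@aeS2 R _ _ _ _ P zLt) => t H1 H2 Ot.
    have p := H1 Ot j; have q := H2 Ot j.
    have zB : tz (xwt w tau) t ord0 j <= B by exact: (le_trans (ler_norm _) q).
    have B0 : 0 < B by exact: (lt_le_trans p zB).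
    rewrite lerN2; apply: (@le_trans _ _ (ln B)); last by rewrite le_max lexx.
    by rewrite ler_ln ?posrE.
have hup : (Fomegatau t0 tE f c b tp w tau xe <=
    (Fomega t0 tE f c b tp w xe + tau * (nzr * (- ln tau * Om)))%:E)%E.
  rewrite /Fomegatau (EFinD (Fomega t0 tE f c b tp w xe)) (EFinM tau).
  apply: leeD2l; apply: lee_wpmul2l => //.
  by rewrite lee_fin ltW.
have P : \forall t \ae (@lebesgue_measure R), Omega t0 tE t ->
    forall j : 'I_nz, 0 < tz (xwt w tau) t ord0 j.
  apply: contrapT => nP.
  have H := le_trans (mint xe inXe) hup; move: H.
  rewrite {1}/Fomegatau {1}/Gamma asboolF // gt0_muley ?lte_fin // addey //.
have zge0t : zge0 t0 tE (xwt w tau).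
  by move: P; apply: aeS => t H Ot j; exact: ltW (H Ot j).
have hlow := minw _ inXt zge0t.
have key : Fomega t0 tE f c b tp w (xwt w tau) + tau * (nzr * (- (kB * Om)))
    <= Fomega t0 tE f c b tp w xe + tau * (nzr * (- ln tau * Om)).
  rewrite -lee_fin; apply: (le_trans _ (le_trans (mint xe inXe) hup)).
  rewrite /Fomegatau (EFinD (Fomega t0 tE f c b tp w (xwt w tau))) (EFinM tau).
  apply: leeD2l; apply: lee_wpmul2l.
    by rewrite lee_fin ltW.
  exact: hGt P.
rewrite ger0_norm ?subr_ge0 //.
have hc : tau * c1 = (Lp * (nzr * tau)) * Om
    + (2 * w)^-1 * ((Lp * (nzr * tau) * (2 * Kp)) * Om) by rewrite /c1; ring.
rewrite -hc in hFe.
have E1 : Fomega t0 tE f c b tp w (xwt w tau) - Fomega t0 tE f c b tp w (xw w)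
    <= (c1 + nzr * (kB * Om)) * tau + Bc * (tau * (- ln tau)).
  have e1 : tau * (nzr * (- (kB * Om))) = - (nzr * (kB * Om) * tau) by ring.
  have e2 : tau * (nzr * (- ln tau * Om)) = Bc * (tau * (- ln tau)) by rewrite /Bc; ring.
  have e3 : (c1 + nzr * (kB * Om)) * tau = tau * c1 + nzr * (kB * Om) * tau by ring.
  rewrite e1 e2 in key; rewrite e3; lra.
apply: (le_trans E1); apply: (le_trans _ (@pow_bound R tau zeta A Bc tau0 tau1' _ _ _)) => //.
- apply: lerD => //; apply: ler_wpM2r; first exact: ltW.
  by rewrite le_max lexx.
- by case/andP: hz.
- by rewrite le_max lexx orbT.
- by rewrite /Bc mulr_ge0.
Qed.
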